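(* There is an absolute constant $K$ such that the following holds. Let $n \ge 1$ and $0 \le c < n$ be integers, and let $(h(i))_{i \ge 0}$ be a Fibonacci-automatic sequence generated by a Fibonacci-DFAO with $m$ states. Then there is a Fibonacci-DFAO with at most $K m^2 n^4$ states generating the linear subsequence $(h(ni+c))_{i \ge 0}$.
   Context: Fibonacci numbers $F_0=0,F_1=1,F_k=F_{k-1}+F_{k-2}$; for a binary word $x=x_1\cdots x_\ell$, $[x]=\sum_j x_j F_{\ell-j+2}$; a valid Fibonacci representation is a binary word with no factor $11$ (leading zeros allowed). A Fibonacci-DFAO is a deterministic finite automaton with output $(Q,\{0,1\},\delta,q_0,\Delta,\tau)$ (partial $\delta$ allowed) reading valid Fibonacci representations most significant digit first, with output independent of leading zeros; it generates $(h(i))_{i\ge0}$ if $h(i)=\tau(\delta(q_0,x))$ for every valid $x$ with $[x]=i$. A sequence is Fibonacci-automatic if some Fibonacci-DFAO generates it. *)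

(* Defs.v *)
From mathcomp Require Import all_boot.
Set Implicit Arguments. Unset Strict Implicit. Unset Printing Implicit Defensive.

Fixpoint fib (k : nat) : nat :=
  match k with
  | 0 => 0
  | 1 => 1
  | (k'.+1 as k1).+1 => fib k1 + fib k'
  end.

(* [x] = sum_j x_j F_{l-j+2} for x = x_1 ... x_l (most significant first):
   the first letter of a word of length l has weight F_{l+1}. *)
Fixpoint fibval (x : seq bool) : nat :=
  match x with
  | [::] => 0
  | b :: x' => b * fib (size x').+2 + fibval x'
  end.

(* valid Fibonacci representation: no factor 11 (leading zeros allowed). *)
Fixpoint fib_valid (x : seq bool) : bool :=
  match x with
  | true :: ((true :: _) as _) => false
  | _ :: x' => fib_valid x'
  | [::] => true
  end.

Record DFAO (Delta : Type) := MkDFAO {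
  dfao_state : finType;
  dfao_delta : dfao_state -> bool -> option dfao_state;
  dfao_init  : dfao_state;
  dfao_out   : dfao_state -> Delta
}.

Fixpoint dfao_run (Delta : Type) (A : DFAO Delta) (q : dfao_state A)
    (x : seq bool) : option (dfao_state A) :=
  match x with
  | [::] => Some q
  | b :: x' => match dfao_delta q b with
               | Some q' => dfao_run q' x'
               | None => None
               end
  end.

(* A generates h: for every valid x, delta(q0,x) is defined and
   tau(delta(q0,x)) = h([x]).  (This forces output to be independent of
   leading zeros.) *)
Definition fib_generates (Delta : Type) (A : DFAO Delta) (h : nat -> Delta) : Prop :=
  forall x : seq bool, fib_valid x ->
    exists q, dfao_run (dfao_init A) x = Some q /\ dfao_out q = h (fibval x).

(* Main.v *)
From Stdlib Require Import Reals Lra Psatz ClassicalEpsilon.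
Require Import Defs.
From mathcomp Require Import all_boot zify.

Lemma fibSS k : fib k.+2 = fib k.+1 + fib k. Proof. by []. Qed.

Lemma fvc b x : fib_valid (b :: x) = fib_valid x && ~~ (b && head false x).
Proof. case: b; case: x => [|[] x] /=; by rewrite ?andbF ?andbT. Qed.

Lemma fv_cat w z : fib_valid (w ++ z) =
  [&& fib_valid w, fib_valid z & ~~ (last false w && head false z)].
Proof.
elim: w => [|b w IH]; first by rewrite /= andbT.
rewrite cat_cons !fvc IH; case: w {IH} => [|b' w] /=.
  by case: b; case: z => [|[] z] /=; rewrite ?andbT ?andbF.
by set P := (if b' then _ else _); case: P; case: (fib_valid z); case: (b && b'); case: (last _ _ && _).
Qed.

Lemma fv_rcons w b : fib_valid (rcons w b) = fib_valid w && ~~ (b && last false w).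
Proof. by rewrite -cats1 fv_cat /=; case: b; case: (last false w); case: (fib_valid w). Qed.

Lemma fibval_nseq j : fibval (nseq j false) = 0.
Proof. by elim: j. Qed.

Lemma fibval_cons b w : fibval (b :: w) = b * fib (size w).+2 + fibval w.
Proof. by []. Qed.

Definition G (w : seq bool) j := fibval (w ++ nseq j false).

Lemma fibval_cat w z : fibval (w ++ z) = G w (size z) + fibval z.
Proof.
rewrite /G; elim: w => [|b w IH]; first by rewrite /= fibval_nseq.
by rewrite !cat_cons !fibval_cons !size_cat size_nseq IH addnA.
Qed.

Lemma G_rec w j : G w j.+2 = G w j.+1 + G w j.
Proof.
rewrite /G; elim: w => [|b w IH]; first by rewrite /= !fibval_nseq.
rewrite !cat_cons !fibval_cons !size_cat !size_nseq IH !addnS fibSS; lia.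
Qed.

Lemma fib_mono k : fib k <= fib k.+1.
Proof. by case: k => // k; rewrite fibSS leq_addr. Qed.

Lemma fib_monoS a b : a <= b -> fib a <= fib b.
Proof.
move=> /subnK <-; elim: (b - a) => // d IH; rewrite addSn.
exact: leq_trans IH (fib_mono _).
Qed.

Lemma fib_pos k : 0 < fib k.+1.
Proof. elim: k => // k IH; rewrite fibSS; lia. Qed.

Lemma fib_add a b : fib (a + b).+1 = fib a.+1 * fib b.+1 + fib a * fib b.
Proof.
suff H : forall b, fib (a + b).+1 = fib a.+1 * fib b.+1 + fib a * fib b /\
   fib (a + b.+1).+1 = fib a.+1 * fib b.+2 + fib a * fib b.+1 by case: (H b).
elim=> [|k [IH1 IH2]].
- rewrite addn0 addn1 /= muln1 muln0 addn0; split=> //.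
  by rewrite muln1.
- split=> //.
  have E : fib (a + k.+2).+1 = fib (a + k.+1).+1 + fib (a+k).+1 by rewrite !addnS fibSS.
  rewrite E IH2 IH1 (fibSS k.+1) (fibSS k) !mulnDr; lia.
Qed.

Lemma fv_bound w : fib_valid w ->
  fibval w < fib (size w).+2 /\ (~~ head false w -> fibval w < fib (size w).+1).
Proof.
elim: w => [|b w IH] //; rewrite fvc => /andP [Hw Hh].
have [IH1 IH2] := IH Hw.
rewrite fibval_cons; change (size (b::w)) with (size w).+1.
have E := fibSS (size w).+1; have E2 := fib_mono (size w).+1.
case: b Hh => Hh.
- have H3 := IH2 Hh; rewrite /nat_of_bool mul1n; split; [lia | by []].
- rewrite /nat_of_bool mul0n add0n; split=> [|_]; lia.
Qed.

Definition bs (b : bool) j := if b then fib j.+1 else fib j.+2.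

Lemma bs_rec b j : bs b j.+2 = bs b j.+1 + bs b j.
Proof. by case: b. Qed.

Lemma fv_cat_bound w z : fib_valid (w ++ z) -> fibval z < bs (last false w) (size z).
Proof.
rewrite fv_cat => /and3P [_ Hz Hh]; have [H1 H2] := fv_bound z Hz.
by case: (last false w) Hh => //= Hh; apply: H2.
Qed.

Fixpoint zw (b : bool) (M len : nat) : seq bool :=
  match len with
  | 0 => [::]
  | l.+1 => if ~~ b && (fib l.+2 <= M) then true :: zw true (M - fib l.+2) l
            else false :: zw false M l
  end.

Lemma zw_size (b : bool) M len : size (zw b M len) = len.
Proof. elim: len b M => //= l IH b M; case: ifP => _ /=; by rewrite IH. Qed.

Lemma zw_head (b : bool) M len : b -> head false (zw b M len) = false.
Proof. by case: len => //= l; case: b. Qed.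

Lemma zw_spec (b : bool) M len : M < bs b len ->
  [/\ fibval (zw b M len) = M, fib_valid (zw b M len) & ~~ (b && head false (zw b M len))].
Proof.
elim: len b M => [|l IH] b M.
- by case: b; case: M.
- have F := fibSS l.+1.
  change (zw b M l.+1) with (if ~~ b && (fib l.+2 <= M) then true :: zw true (M - fib l.+2) l
            else false :: zw false M l).
  case: ifP => [/andP [Hb HM] | Hn] HMb.
  + have HM' : M - fib l.+2 < bs true l.
      by move: HMb; rewrite /bs; case: b Hb => // _; lia.
    have [E1 E2 E3] := IH true _ HM'.
    rewrite fibval_cons zw_size fvc E1 E2 zw_head // /nat_of_bool; split => //.
    + lia.
    + by case: b Hb HMb.
  + have HM' : M < bs false l.
      move: HMb Hn; rewrite /bs; case: b => /=; first by [].
      by move=> _ /negbT; rewrite -ltnNge.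
    have [E1 E2 E3] := IH false _ HM'.
    by rewrite fibval_cons zw_size fvc E1 E2 /= mul0n add0n andbF.
Qed.

Lemma fibval_rcons u b : fibval (rcons u b) = fibval (rcons u false) + b.
Proof. rewrite -!cats1 !fibval_cat; case: b => /=; lia. Qed.

Lemma G1 u : G u 1 = fibval (rcons u false).
Proof. by rewrite /G -cats1. Qed.

Lemma fv_uniq w w' : fib_valid w -> fib_valid w' -> size w = size w' ->
  fibval w = fibval w' -> w = w'.
Proof.
elim: w w' => [|b u IH] [|b' u'] // Hw Hw' [Hs].
rewrite !fibval_cons Hs; move: Hw Hw'; rewrite !fvc => /andP [Hu Hh] /andP [Hu' Hh'].
have [A1 A2] := fv_bound u Hu; have [B1 B2] := fv_bound u' Hu'.
case: b Hh; case: b' Hh' => Hh' Hh; rewrite /nat_of_bool ?mul1n ?mul0n ?add0n.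
- by move=> /addnI E; rewrite (IH u').
- move=> E; exfalso; lia.
- rewrite Hs in A1; move=> E; exfalso; lia.
- by move=> E; rewrite (IH u').
Qed.

Lemma last_cons_ne (x y : bool) s : s <> [::] -> last x s = last y s.
Proof. by case: s. Qed.

Lemma fv_mono w w' : fib_valid w -> fib_valid w' -> size w = size w' ->
  fibval w < fibval w' ->
  fibval (rcons w false) + bs (last false w) 1 <= fibval (rcons w' false).
Proof.
elim: w w' => [|b u IH] [|b' u'] // Hw Hw' [Hs].
rewrite !rcons_cons !fibval_cons !size_rcons Hs.
move: Hw Hw'; rewrite !fvc => /andP [Hu Hh] /andP [Hu' Hh'].
have [A1 A2] := fv_bound u Hu; have [B1 B2] := fv_bound u' Hu'.
case: b Hh; case: b' Hh' => Hh' Hh; rewrite /nat_of_bool ?mul1n ?mul0n ?add0n.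
- move=> Hlt.
  have -> : last false (true :: u) = last false u.
    by case: u Hs A1 Hlt Hu A2 Hh {IH} => [|y s] //; case: u' {Hh' B1 B2 Hu'} => //= _ _; lia.
  have := IH u' Hu Hu' Hs ltac:(lia); lia.
- lia.
- move=> _.
  have -> : last false (false :: u) = last false u by case: u {IH Hs A1 A2 Hh Hu}.
  have Hv : fib_valid (rcons u (~~ last false u)) by rewrite fv_rcons Hu; case: (last false u).
  have [C1 _] := fv_bound _ Hv.
  rewrite size_rcons in C1; rewrite fibval_rcons in C1.
  have : bs (last false u) 1 = 1 + ~~ last false u by case: (last false u).
  rewrite Hs in C1; lia.
- move=> Hlt.
  have -> : last false (false :: u) = last false u by case: u {IH Hs A1 A2 Hh Hu Hlt}.
  have := IH u' Hu Hu' Hs ltac:(lia); lia.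
Qed.

Lemma e_lt_bs (e : bool) Q : ~~ (e && last false Q) -> e < bs (last false Q) 1.
Proof. by case: e; case: (last false Q). Qed.

Lemma G0 u : G u 0 = fibval u.
Proof. by rewrite /G cats0. Qed.

Lemma fv_succ P P2 : fib_valid P -> fib_valid P2 -> size P = size P2 ->
  fibval P2 = (fibval P).+1 ->
  fibval (rcons P2 false) = fibval (rcons P false) + bs (last false P) 1.
Proof.
move=> HP HP2 Hs Hv.
have Hm := fv_mono P P2 HP HP2 Hs ltac:(lia).
apply/eqP; rewrite eqn_leq Hm andbT; rewrite leqNgt; apply/negP => Hlt.
set E := fibval (rcons P false) + bs (last false P) 1.
have HP2r : fib_valid (rcons P2 false) by rewrite fv_rcons HP2.
have [B1 _] := fv_bound _ HP2r; rewrite size_rcons -Hs in B1.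
have HEb : E < bs false (size P).+1 by rewrite /bs; lia.
have [W1 W2 _] := zw_spec false E (size P).+1 HEb.
have W3 := zw_size false E (size P).+1.
move: (zw false E (size P).+1) W1 W2 W3 => W.
case/lastP: W => [|Q e] //; rewrite size_rcons => HW Hval [HsQ].
rewrite fv_rcons in Hval; case/andP: Hval => HQ Hqe.
rewrite fibval_rcons in HW.
have Hbs := e_lt_bs e Q Hqe.
have bs1 : forall b, 0 < bs b 1 by case.
have [Hl|Hg|Heq] := ltngtP (fibval Q) (fibval P).
- have := fv_mono Q P HQ HP HsQ Hl. have := bs1 (last false P). lia.
- case: (ltngtP (fibval Q) (fibval P2)) => [Hl2|Hg2|Heq2].
  + lia.
  + have := fv_mono P2 Q HP2 HQ ltac:(lia) Hg2. have := bs1 (last false P2). lia.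
  + have EQ := fv_uniq Q P2 HQ HP2 ltac:(lia) Heq2. subst Q. lia.
- have EQ := fv_uniq Q P HQ HP HsQ Heq. subst Q. lia.
Qed.

Lemma rec_le (f g : nat -> nat) : (forall j, f j.+2 = f j.+1 + f j) ->
  (forall j, g j.+2 = g j.+1 + g j) -> f 0 <= g 0 -> f 1 <= g 1 -> forall j, f j <= g j.
Proof.
move=> Hf Hg H0 H1.
suff H : forall j, f j <= g j /\ f j.+1 <= g j.+1 by move=> j; case: (H j).
elim=> [|j [IH1 IH2]] //; split=> //; rewrite Hf Hg; lia.
Qed.

Lemma rec_eq (f g : nat -> nat) : (forall j, f j.+2 = f j.+1 + f j) ->
  (forall j, g j.+2 = g j.+1 + g j) -> f 0 = g 0 -> f 1 = g 1 -> forall j, f j = g j.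
Proof.
move=> Hf Hg H0 H1 j; apply/eqP; rewrite eqn_leq.
rewrite (rec_le f g) ?H0 ?H1 //= (rec_le g f) ?H0 ?H1 //.
Qed.

Lemma G_succ P P2 : fib_valid P -> fib_valid P2 -> size P = size P2 ->
  fibval P2 = (fibval P).+1 -> forall j, G P2 j = G P j + bs (last false P) j.
Proof.
move=> HP HP2 Hs Hv; apply: rec_eq.
- exact: G_rec.
- move=> j; rewrite !G_rec bs_rec; lia.
- by rewrite !G0 Hv /bs; case: (last false P) => /=; lia.
- by rewrite !G1 (fv_succ P P2).
Qed.

Lemma run_cat (D : Type) (A : DFAO D) (q : dfao_state A) x y :
  dfao_run q (x ++ y) = obind (fun q' => dfao_run q' y) (dfao_run q x).
Proof.
elim: x q => [|b x IH] q //=; case: (dfao_delta q b) => //.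
Qed.

Section RealPart.

Local Open Scope R_scope.
Definition phi : R := (1 + sqrt 5) / 2.

Lemma phi_sq : phi * phi = phi + 1.
Proof.
rewrite /phi; have H := sqrt_sqrt 5 ltac:(lra); nra.
Qed.

Lemma phi_bnd : 1.6 < phi < 1.62.
Proof.
rewrite /phi; have H := sqrt_sqrt 5 ltac:(lra); have H0 := sqrt_pos 5; nra.
Qed.

Lemma fibval_rr u b : fibval (rcons (rcons u b) false) =
  (fibval (rcons u false) + fibval u + 2 * b)%nat.
Proof.
rewrite -!cats1 -catA fibval_cat /= G_rec.
have -> : G u 1 = fibval (u ++ [:: false]) by rewrite cats1 -G1.
rewrite G0; case: b => /=; lia.
Qed.

Lemma INR_nat (n : nat) : INR n = INR n. Proof. by []. Qed.

Lemma e_bound w : fib_valid w ->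
  -1 < INR (fibval (rcons w false)) - phi * INR (fibval w) < 1 /\
  (last false w = false ->
   -(phi - 1) < INR (fibval (rcons w false)) - phi * INR (fibval w) < phi - 1).
Proof.
have Hp := phi_bnd; have Hq := phi_sq.
elim/last_ind: w => [|u b IH].
- have -> : fibval (rcons [::] false) = 0%nat by [].
  rewrite /=; lra.
- rewrite fv_rcons last_rcons => /andP [Hu Hb].
  have [[I1 I2] I3] := IH Hu.
  rewrite fibval_rr (fibval_rcons u b).
  have -> : (2 * b)%nat = (b + b)%nat by lia.
  rewrite !plus_INR.
  set a := INR (fibval u) in I1 I2 I3 *.
  set a1 := INR (fibval (rcons u false)) in I1 I2 I3 *.
  case: b Hb => Hb /=.
  + have [J1 J2] := I3 ltac:(by case: (last false u) Hb).
    split; last by [].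
    have Ha : phi * phi * a = phi * a + a by rewrite Hq; ring.
    have E : a1 + a + (1 + 1) - phi * (a1 + 1) = (1 - phi) * (a1 - phi * a) + 2 - phi by nra.
    rewrite E; split; nra.
  + have Ha : phi * phi * a = phi * a + a by rewrite Hq; ring.
    have E : a1 + a + (0 + 0) - phi * (a1 + 0) = (1 - phi) * (a1 - phi * a) by nra.
    rewrite E; split; [split; nra | move=> _; split; nra].
Qed.

Lemma fib_phi i : -1 <= INR (fib i.+1) - phi * INR (fib i) <= 1.
Proof.
have Hp := phi_bnd; have Hq := phi_sq.
elim: i => [|i IH]; first by rewrite /=; lra.
rewrite fibSS plus_INR.
set a := INR (fib i) in IH *; set a1 := INR (fib i.+1) in IH *.
have Ha : phi * phi * a = phi * a + a by rewrite Hq; ring.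
have E : a1 + a - phi * a1 = (1 - phi) * (a1 - phi * a) by nra.
rewrite E; split; nra.
Qed.

Lemma nat_le_of_R (a b : nat) : INR a < INR b + 1 -> (a <= b)%N.
Proof.
move=> H; have : (a < S b)%coq_nat by apply: INR_lt; rewrite S_INR.
move/ltP; lia.
Qed.

Lemma INRM (a b : nat) : INR (a * b)%N = INR a * INR b.
Proof. by rewrite -multE mult_INR. Qed.

Lemma INRD (a b : nat) : INR (a + b)%N = INR a + INR b.
Proof. by rewrite -plusE plus_INR. Qed.

Lemma INR_le' (a b : nat) : (a <= b)%N -> INR a <= INR b.
Proof. by move/leP; apply: le_INR. Qed.

Lemma case1_bounds (n u X1 G0 G1 b0 b1 : nat) : (1 <= n)%N ->
  INR X1 < phi * INR u + 1 -> phi * INR u - 1 < INR X1 ->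
  INR G1 < phi * INR G0 + 1 -> phi * INR G0 - 1 < INR G1 ->
  phi * INR b0 <= INR b1 + 1 ->
  (G0 + n + 1 <= n * u)%N -> (n * u <= G0 + n + b0)%N ->
  [/\ (G1 <= n * X1)%N, (n * X1 + 2 * n <= G1 + b1 + 5 * n + 2)%N
    & (n * X1 + 2 * G0 <= G1 + 2 * (n * u) + n + 1)%N].
Proof.
have Hp := phi_bnd.
move=> Hn H1 H2 H3 H4 H5 /INR_le' H6 /INR_le' H7.
have Hn' := INR_le' _ _ Hn.
rewrite !INRD !INRM in H6 H7. rewrite /= in Hn'.
have Hu0 : 0 <= INR u by apply: pos_INR.
have HG0 : 0 <= INR G0 by apply: pos_INR.
have Hb0 : 0 <= INR b0 by apply: pos_INR.
rewrite /= in H6.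
have P1 : 0 < INR n * (INR X1 - (phi * INR u - 1)) by apply: Rmult_lt_0_compat; lra.
have P2 : 0 < INR n * (phi * INR u + 1 - INR X1) by apply: Rmult_lt_0_compat; lra.
split; apply: nat_le_of_R; rewrite ?INRD ?INRM /=; nra.
Qed.

End RealPart.

Lemma fib_ge k : k <= fib k.+1.
Proof.
suff H : forall j, j <= fib j.+1 /\ j.+1 <= fib j.+2 by case: (H k).
elim=> [|j [IH1 IH2]] //; split=> //; rewrite fibSS; have := fib_pos j; lia.
Qed.

Lemma G_ge w j : fibval w * fib j.+1 <= G w j.
Proof.
rewrite /G; elim: w => [|b w IH]; first by rewrite mul0n.
rewrite cat_cons !fibval_cons size_cat size_nseq mulnDl.
have E := fib_add (size w).+1 j; rewrite addSn in E.
apply: leq_add => //; case: b; rewrite /nat_of_bool ?mul1n ?mul0n // E; apply: leq_addr.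
Qed.

Fixpoint Arec (a b k : nat) : nat :=
  match k with 0 => a | k'.+1 => Arec b (a + b) k' end.

Lemma Arec_rec a b k : Arec a b k.+2 = Arec a b k.+1 + Arec a b k.
Proof.
elim: k a b => [|k IH] a b; first by rewrite /= addnC.
exact: (IH b (a + b)).
Qed.

Lemma nseqS_rcons P j : P ++ nseq j.+1 false = rcons (P ++ nseq j false) false.
Proof. by rewrite -cats1 -catA; congr (_ ++ _); elim: j => //= j ->. Qed.

Lemma arith57 a f bb n t c : a + f <= bb -> n + t <= f -> c < n -> a + c + t < bb.
Proof. lia. Qed.

Lemma arith67 M b1 b2 : ~~ (M < b1) -> M < b1 + b2 -> M - b1 < b2.
Proof. rewrite -leqNgt; lia. Qed.

Lemma arith74 g M b1 : ~~ (M < b1) -> g + M = g + b1 + (M - b1).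
Proof. rewrite -leqNgt; lia. Qed.

Lemma arith53 a b d e : a + b + d + e = a + (b + e + d).
Proof. lia. Qed.

Section Main.
Variables (n c : nat) (Hn : 0 < n) (Hc : c < n).

Lemma sh_ex : exists j, 5 * n + 2 <= fib j.+1.
Proof. by exists (5 * n + 2); apply: fib_ge. Qed.

Definition sh := ex_minn sh_ex.

Lemma sh_prop : 5 * n + 2 <= fib sh.+1 /\ fib sh.+2 <= 15 * n + 3.
Proof.
rewrite /sh; case: ex_minnP => m Hm Hmin; split=> //.
case: m Hm Hmin => [|m] Hm Hmin; first by move: Hm; rewrite /=; lia.
have H1 : fib m.+1 < 5 * n + 2.
  rewrite ltnNge; apply/negP => H; have := Hmin m H; lia.
have E1 := fibSS m.+1; have E2 := fibSS m; have := fib_mono m; lia.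
Qed.

Variables (x : seq bool) (Hx : fib_valid x).

Local Notation l := (size x).
Local Notation u := (fibval x).
Definition T := n * u - (n + 1).
Definition W := zw false T (l.+1 + sh).
Definition P := take l.+1 W.
Definition P2 := zw false (fibval P).+1 l.+1.
Definition A0 := n * u - G P sh.
Definition A1 := n * fibval (rcons x false) - G P sh.+1.

Lemma W_props : [/\ fib_valid P, size P = l.+1, G P sh <= T & T < G P sh + bs (last false P) sh].
Proof.
have [Hs1 Hs2] := sh_prop.
have [Hu _] := fv_bound x Hx.
have HT : T < bs false (l.+1 + sh).
  rewrite /bs /T.
  have E := fib_add sh.+1 l.+1.
  have -> : (l.+1 + sh).+2 = (sh.+1 + l.+1).+1 by lia.
  rewrite E.
  have : n * u < fib sh.+2 * fib l.+2.
    apply: (@leq_trans (n * fib l.+2)); first by rewrite ltn_pmul2l.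
    apply: leq_mul => //; have := fib_mono sh.+1; lia.
  lia.
have [W1 W2 _] := zw_spec false T _ HT.
have W3 := zw_size false T (l.+1 + sh).
have HW : W = P ++ drop l.+1 W by rewrite cat_take_drop.
have HsP : size P = l.+1 by rewrite /P size_take /W W3; case: ltnP => //; lia.
have Hv : fib_valid (P ++ drop l.+1 W) by rewrite -HW.
have Hsz : size (drop l.+1 W) = sh by rewrite size_drop /W W3; lia.
have Hb := fv_cat_bound _ _ Hv; rewrite Hsz in Hb.
move: (Hv); rewrite fv_cat => /and3P [HP _ _].
have Hf : fibval W = T by [].
rewrite HW fibval_cat Hsz in Hf.
split=> //; lia.
Qed.

Lemma P2_props : [/\ fib_valid P2, size P2 = l.+1 & fibval P2 = (fibval P).+1].
Proof.
have [Hs1 Hs2] := sh_prop.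
have [Hu _] := fv_bound x Hx.
have [HP HsP HG HT] := W_props.
have Hg := G_ge P sh.
have HTu : T <= n * u by rewrite /T leq_subr.
have Hlt : fibval P < fib l.+2.
  rewrite ltnNge; apply/negP => H.
  have H1 := leq_mul H (leqnn (fib sh.+1)).
  have H2 : n * u < fib sh.+1 * fib l.+2.
    apply: (@leq_trans (n * fib l.+2)); first by rewrite ltn_pmul2l.
    by apply: leq_mul => //; lia.
  rewrite mulnC in H1; lia.
have Hb : (fibval P).+1 < bs false l.+1.
  rewrite /bs fibSS; have := fib_pos l; lia.
have [E1 E2 _] := zw_spec false _ _ Hb.
by rewrite /P2 zw_size.
Qed.

Lemma fv_Pn : fib_valid (P ++ nseq sh false).
Proof.
have [HP _ _ _] := W_props.
rewrite fv_cat HP /=; apply/andP; split; first by elim: sh => //= j ->; case: (nseq j false).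
by case: sh => //=; rewrite andbF.
Qed.

Lemma GPS : G P sh.+1 = fibval (rcons (P ++ nseq sh false) false).
Proof. by rewrite /G nseqS_rcons. Qed.

Lemma A_props : [/\ n * u = G P sh + A0, n * fibval (rcons x false) = G P sh.+1 + A1,
  A0 <= 22 * n & A1 <= 46 * n] /\
  (A0 + n * fib 2 <= bs (last false P) sh + bs (last false P2) sh /\
  A1 + n * fib 3 <= bs (last false P) sh.+1 + bs (last false P2) sh.+1).
Proof.
have [Hs1 Hs2] := sh_prop.
have [HP HsP HG HT] := W_props.
have [[Ex1 Ex2] _] := e_bound x Hx.
have [[EP1 EP2] _] := e_bound _ fv_Pn.
rewrite -GPS -/(G P sh) in EP1 EP2.
have Hbsge : forall b j, fib j.+1 <= bs b j by move=> [] j; rewrite /bs //; apply: fib_mono.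
have Hbsle : forall b j, bs b j <= fib j.+2 by move=> [] j; rewrite /bs //; apply: fib_mono.
have B2a := Hbsge (last false P2) sh.
have B2b := Hbsge (last false P2) sh.+1.
have B1a := Hbsle (last false P) sh.
have Fm := fib_mono sh.+1.
have Fs : fib 2 = 1 by []. have Fs3 : fib 3 = 2 by [].
rewrite Fs Fs3 /A0 /A1.
set X1 := fibval (rcons x false) in Ex1 Ex2 *.
set G0 := G P sh in HG HT EP1 EP2 *.
set G1 := G P sh.+1 in EP1 EP2 *.
set b0 := bs (last false P) sh in HT B1a *.
set b1 := bs (last false P) sh.+1.
have Hphi : Rle (Rmult phi (INR b0)) (Rplus (INR b1) 1).
  rewrite /b0 /b1 /bs; case: (last false P).
  - have := fib_phi sh.+1; lra.
  - have := fib_phi sh.+2; lra.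
case: (leqP (n + 1) (n * u)) => Hcase.
- have HT' : T = n * u - (n + 1) by [].
  have [C1 C2 C3] := case1_bounds n u X1 G0 G1 b0 b1 Hn
    ltac:(lra) ltac:(lra) ltac:(lra) ltac:(lra) Hphi ltac:(lia) ltac:(lia).
  split; [split; lia | split; lia].
- have HT0 : T = 0 by rewrite /T; lia.
  have HG0 : G0 = 0 by lia.
  have Hu1 : u <= 1 by move: Hcase; case: u => [|[|u']] //; nia.
  have HG1 : G1 <= 0.
    apply: nat_le_of_R; rewrite HG0 /= in EP2; rewrite /=; nra.
  have HX1 : X1 <= 2.
    apply: nat_le_of_R; have := INR_le' _ _ Hu1; have := phi_bnd; have := pos_INR u.
    rewrite /= => *; nra.
  split; [split; nia | split; nia].
Qed.
End Main.

Section Main2.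
Variables (n c : nat) (Hn : 0 < n) (Hc : c < n).
Variables (Delta : Type) (h : nat -> Delta) (A : DFAO Delta) (HA : fib_generates A h).

Definition Sdesc : finType :=
  (bool * dfao_state A * dfao_state A * bool * bool * 'I_(22 * n).+1 * 'I_(46 * n).+1)%type.

Definition q1 x := odflt (dfao_init A) (dfao_run (dfao_init A) (P n x)).
Definition q2 x := odflt (dfao_init A) (dfao_run (dfao_init A) (P2 n x)).

Definition desc x : Sdesc :=
  (last false x, q1 x, q2 x, last false (P n x), last false (P2 n x),
   inord (A0 n x), inord (A1 n x)).

Definition Phi (d : Sdesc) (y : seq bool) : Delta :=
  let: (_, r1, r2, b1, b2, a0, a1) := d in
  let k := size y in
  let M1 := Arec a0 a1 k + c + n * fibval y in
  if M1 < bs b1 (sh n + k) then dfao_out (odflt r1 (dfao_run r1 (zw b1 M1 (sh n + k))))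
  else dfao_out (odflt r2 (dfao_run r2 (zw b2 (M1 - bs b1 (sh n + k)) (sh n + k)))).

Lemma key x y : fib_valid x -> fib_valid (x ++ y) ->
  h (n * fibval (x ++ y) + c) = Phi (desc x) y.
Proof.
move=> Hx Hxy.
have [[E0 E1 HB0 HB1] [D0 D1]] := A_props n c Hn Hc x Hx.
have [HP HsP _ _] := W_props n c Hn Hc x Hx.
have [HP2 HsP2 HvP2] := P2_props n c Hn Hc x Hx.
rewrite /Phi /desc /= !inordK ?ltnS //.
set k := size y.
set b1 := last false (P n x); set b2 := last false (P2 n x).
have Hy : fib_valid y by move: Hxy; rewrite fv_cat => /and3P [].
have [Hyb _] := fv_bound y Hy.
have Hid : forall j, n * G x j = G (P n x) (sh n + j) + Arec (A0 n x) (A1 n x) j.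
  apply: rec_eq.
  - by move=> j; rewrite G_rec mulnDr.
  - by move=> j; rewrite !addnS G_rec Arec_rec addnACA.
  - by rewrite G0 addn0 E0.
  - by rewrite G1 addn1 E1.
have Hle : forall j, Arec (A0 n x) (A1 n x) j + n * fib j.+2 <=
    bs b1 (sh n + j) + bs b2 (sh n + j).
  apply: rec_le.
  - by move=> j; rewrite Arec_rec fibSS mulnDr addnACA.
  - by move=> j; rewrite !addnS !bs_rec addnACA.
  - by rewrite !addn0.
  - by rewrite !addn1.
set M1 := Arec (A0 n x) (A1 n x) k + c + n * fibval y.
have HN : n * fibval (x ++ y) + c = G (P n x) (sh n + k) + M1.
  by rewrite fibval_cat -/k mulnDr Hid /M1 arith53.
have HM : M1 < bs b1 (sh n + k) + bs b2 (sh n + k).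
  have H1 := Hle k.
  have H2 : n * (fibval y).+1 <= n * fib k.+2 by rewrite leq_mul2l Hyb orbT.
  rewrite mulnS in H2; exact: arith57 H1 H2 Hc.
have [qP [HqP _]] := HA (P n x) HP.
have [qP2 [HqP2 _]] := HA (P2 n x) HP2.
rewrite /q1 /q2 HqP HqP2 /=.
case: ifP => HM1.
- have [Z1 Z2 Z3] := zw_spec b1 M1 (sh n + k) HM1.
  have Hv : fib_valid (P n x ++ zw b1 M1 (sh n + k)) by rewrite fv_cat HP Z2.
  have [q [Hq Hout]] := HA _ Hv.
  rewrite run_cat HqP /= in Hq; rewrite Hq /= Hout; congr h.
  by rewrite HN fibval_cat zw_size Z1.
- have HM2 : M1 - bs b1 (sh n + k) < bs b2 (sh n + k) by apply: arith67 (negbT HM1) HM.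
  have [Z1 Z2 Z3] := zw_spec b2 _ (sh n + k) HM2.
  have Hv : fib_valid (P2 n x ++ zw b2 (M1 - bs b1 (sh n + k)) (sh n + k)) by rewrite fv_cat HP2 Z2.
  have [q [Hq Hout]] := HA _ Hv.
  rewrite run_cat HqP2 /= in Hq; rewrite Hq /= Hout; congr h.
  have HGs := G_succ _ _ HP HP2 ltac:(by rewrite HsP HsP2) HvP2 (sh n + k).
  rewrite HN fibval_cat zw_size Z1 HGs -/b1.
  exact: arith74 (negbT HM1).
Qed.
End Main2.

Section Main3.
Variables (n c : nat) (Hn : 0 < n) (Hc : c < n).
Variables (Delta : Type) (h : nat -> Delta) (A : DFAO Delta) (HA : fib_generates A h).

Definition g x := h (n * fibval x + c).
Definition Rel x1 x2 := forall y, fib_valid (x1 ++ y) = fib_valid (x2 ++ y) /\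
  (fib_valid (x1 ++ y) -> g (x1 ++ y) = g (x2 ++ y)).

Lemma Rel_refl x : Rel x x. Proof. by []. Qed.

Lemma Rel_trans x1 x2 x3 : Rel x1 x2 -> Rel x2 x3 -> Rel x1 x3.
Proof.
move=> R1 R2 y; have [V1 G1] := R1 y; have [V2 G2] := R2 y.
split; first by rewrite V1.
by move=> H; rewrite G1 // G2 // -V1.
Qed.

Lemma desc_rel x1 x2 : fib_valid x1 -> fib_valid x2 -> desc n Delta A x1 = desc n Delta A x2 -> Rel x1 x2.
Proof.
move=> H1 H2 E y.
have El : last false x1 = last false x2 by move/(congr1 (fun d : Sdesc n Delta A => d.1.1.1.1.1.1)): E.
have V : fib_valid (x1 ++ y) = fib_valid (x2 ++ y) by rewrite !fv_cat H1 H2 El.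
split=> // Hv; rewrite /g (@key n c Hn Hc Delta h A HA) // E -(@key n c Hn Hc Delta h A HA) //; by rewrite -V.
Qed.

Definition rep (d : Sdesc n Delta A) : seq bool :=
  epsilon (inhabits [::]) (fun x => fib_valid x /\ desc n Delta A x = d).

Lemma rep_spec x : fib_valid x -> fib_valid (rep (desc n Delta A x)) /\ desc n Delta A (rep (desc n Delta A x)) = desc n Delta A x.
Proof.
move=> Hx; apply: (epsilon_spec (inhabits [::]) (fun x' => fib_valid x' /\ desc n Delta A x' = desc n Delta A x)).
by exists x.
Qed.

Definition Bdelta (d : Sdesc n Delta A) (b : bool) : option (Sdesc n Delta A) :=
  if fib_valid (rcons (rep d) b) then Some (desc n Delta A (rcons (rep d) b)) else None.

Definition B : DFAO Delta := @MkDFAO Delta (Sdesc n Delta A) Bdelta (desc n Delta A [::]) (fun d => g (rep d)).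

Lemma inv x : fib_valid x -> exists x'',
  [/\ fib_valid x'', dfao_run (dfao_init B) x = Some (desc n Delta A x'') & Rel x'' x].
Proof.
elim/last_ind: x => [|u b IH].
- by move=> _; exists [::]; split.
- rewrite fv_rcons => /andP [Hu Hb].
  have [x'' [Hx'' Hrun HR]] := IH Hu.
  rewrite -cats1 run_cat Hrun /=.
  have [Hr Er] := rep_spec x'' Hx''.
  have HRr : Rel (rep (desc n Delta A x'')) u := Rel_trans _ _ _ (desc_rel _ _ Hr Hx'' Er) HR.
  have Hvr : fib_valid (rcons (rep (desc n Delta A x'')) b).
    have [V _] := HRr [:: b]; rewrite !cats1 in V; by rewrite V fv_rcons Hu.
  rewrite /Bdelta Hvr /=.
  exists (rcons (rep (desc n Delta A x'')) b); split=> //.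
  move=> y; rewrite cat_rcons cats1 cat_rcons; exact: HRr (b :: y).
Qed.

Lemma B_gen : fib_generates B (fun i => h (n * i + c)).
Proof.
move=> x Hx; have [x'' [Hx'' Hrun HR]] := inv x Hx.
exists (desc n Delta A x''); split=> //.
have [Hr Er] := rep_spec x'' Hx''.
have R := Rel_trans _ _ _ (desc_rel _ _ Hr Hx'' Er) HR.
have [V Gg] := R [::]; rewrite !cats0 in V Gg.
by rewrite /= Gg // V.
Qed.

Lemma B_card : #|dfao_state B| <= 8 * 1081 * #|dfao_state A| ^ 2 * n ^ 4.
Proof.
have -> : #|dfao_state B| = #|Sdesc n Delta A| by [].
rewrite /Sdesc !card_prod card_bool !card_ord.
set m := #|dfao_state A|.
have H1 : (22 * n).+1 <= 23 * n by lia.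
have H2 : (46 * n).+1 <= 47 * n by lia.
have H4 := leq_mul H1 H2.
have H5 : (23 * n) * (47 * n) = 1081 * (n * n) by lia.
have H6 : n * n <= n ^ 4.
  have -> : n ^ 4 = (n * n) * (n * n) by rewrite !expnS expn0 muln1 !mulnA.
  by rewrite leq_pmulr // muln_gt0 Hn.
have -> : m ^ 2 = m * m by rewrite !expnS expn0 muln1.
have E : 2 * m * m * 2 * 2 * (22 * n).+1 * (46 * n).+1 = (8 * (m * m)) * ((22 * n).+1 * (46 * n).+1).
  by rewrite !mulnA; lia.
rewrite E.
have E2 : 8 * 1081 * (m * m) * n ^ 4 = (8 * (m * m)) * (1081 * n ^ 4) by lia.
rewrite E2; apply: leq_mul => //.
apply: (leq_trans H4); rewrite H5 leq_mul2l H6 orbT //.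
Qed.
End Main3.

Theorem theorem17 :
  exists K : nat,
    forall (n c : nat), 1 <= n -> c < n ->
    forall (Delta : Type) (h : nat -> Delta) (A : DFAO Delta),
      fib_generates A h ->
      exists B : DFAO Delta,
        #|dfao_state B| <= K * #|dfao_state A| ^ 2 * n ^ 4 /\
        fib_generates B (fun i => h (n * i + c)).
Proof.
exists (8 * 1081) => n c Hn Hc Delta h A HA.
exists (B n c Delta h A); split.
- exact: B_card n c Hn Hc Delta h A.
- exact: B_gen n c Hn Hc Delta h A HA.
Qed.
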